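(* Let $0<\alpha\le 2\pi/3$. Then for all $u,v\in V$: $u$ and $v$ are connected in $G^-_\alpha$ if and only if they are connected in $G_R$.
   Context: Let $V$ be a finite set of pairwise distinct points (nodes) in the Euclidean plane, $d$ the Euclidean distance, and $R>0$. Let $G_R=(V,E)$ be the undirected graph with $E=\{\{u,v\}: u\neq v,\ d(u,v)\le R\}$. Fix a finite increasing sequence of radius levels $0<r_1<r_2<\dots<r_k=R$. For $u\in V$ and $1\le i\le k$ let $S_i(u)=\{v\in V\setminus\{u\}: d(u,v)\le r_i\}$. For $0<\alpha<2\pi$, a closed cone of width $\alpha$ with apex $u$ is a set $\{u+t(\cos\varphi,\sin\varphi): t\ge 0,\ \varphi\in[\theta-\alpha/2,\theta+\alpha/2]\}$ for some $\theta$. A finite set $S\subseteq V\setminus\{u\}$ has an $\alpha$-gap (at $u$) if some closed cone of width $\alpha$ with apex $u$ contains no node of $S$ (in particular $\emptyset$ has an $\alpha$-gap). The algorithm CBTC($\alpha$) assigns to each $u$ the index $i_u$ = the least $i\in\{1,\dots,k\}$ such that $S_i(u)$ has no $\alpha$-gap, or $i_u=k$ if there is no such $i$; set $N_\alpha(u)=S_{i_u}(u)$ and $N_\alpha=\{(u,v): v\in N_\alpha(u)\}$ (a directed relation, not necessarily symmetric). Let $E^-_\alpha=\{\{u,v\}: (u,v)\in N_\alpha\text{ and }(v,u)\in N_\alpha\}$ and $G^-_\alpha=(V,E^-_\alpha)$. *)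

(* Defs.v *)
From Stdlib Require Import Reals List Relations.
Open Scope R_scope.

Definition point : Type := (R * R)%type.

Definition dist (p q : point) : R :=
  sqrt ((fst p - fst q) ^ 2 + (snd p - snd q) ^ 2).

Definition radius_levels (k : nat) (r : nat -> R) (Rad : R) : Prop :=
  (1 <= k)%nat /\ 0 < r 1%nat /\
  (forall i, (1 <= i)%nat -> (i < k)%nat -> r i < r (S i)) /\
  r k = Rad.

Definition Sset (V : list point) (r : nat -> R) (i : nat) (u v : point) : Prop :=
  In v V /\ v <> u /\ dist u v <= r i.

Definition in_cone (u : point) (alpha theta : R) (p : point) : Prop :=
  exists t phi, 0 <= t /\ theta - alpha / 2 <= phi <= theta + alpha / 2 /\
    p = (fst u + t * cos phi, snd u + t * sin phi).

Definition has_gap (u : point) (alpha : R) (S : point -> Prop) : Prop :=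
  exists theta, forall v, S v -> ~ in_cone u alpha theta v.

(* i is the index i_u chosen by CBTC(alpha) at u *)
Definition is_iu (V : list point) (k : nat) (r : nat -> R) (alpha : R)
    (u : point) (i : nat) : Prop :=
  (1 <= i <= k)%nat /\
  ((~ has_gap u alpha (Sset V r i u) /\
      forall j, (1 <= j)%nat -> (j < i)%nat -> has_gap u alpha (Sset V r j u))
   \/
   (i = k /\ forall j, (1 <= j <= k)%nat -> has_gap u alpha (Sset V r j u))).

Definition Nalpha (V : list point) (k : nat) (r : nat -> R) (alpha : R)
    (u v : point) : Prop :=
  exists i, is_iu V k r alpha u i /\ Sset V r i u v.

Definition Eminus (V : list point) (k : nat) (r : nat -> R) (alpha : R)
    (u v : point) : Prop :=
  In u V /\ In v V /\ Nalpha V k r alpha u v /\ Nalpha V k r alpha v u.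

Definition ER (V : list point) (Rad : R) (u v : point) : Prop :=
  In u V /\ In v V /\ u <> v /\ dist u v <= Rad.

Definition connected (E : point -> point -> Prop) (u v : point) : Prop :=
  clos_refl_trans point E u v.

(* Main.v *)
From Pilot Require Import Defs.
From Stdlib Require Import Reals List Relations Lra Lia Psatz Classical.
Open Scope R_scope.
Local Notation dist := Pilot.Defs.dist.

Lemma dist_sym p q : dist p q = dist q p.
Proof. unfold dist; f_equal; ring. Qed.

Lemma cos_half x : 0 <= x <= PI / 3 -> 1/2 <= cos x.
Proof.
  intros Hx. pose proof PI_RGT_0.
  rewrite <- cos_PI3.
  destruct (Req_dec x (PI/3)) as [E|E]; [rewrite E; lra|].
  left; apply cos_decreasing_1; lra.
Qed.

Lemma cos_half_abs x : -(PI/3) <= x <= PI / 3 -> 1/2 <= cos x.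
Proof.
  intros Hx. destruct (Rle_dec 0 x).
  - apply cos_half; lra.
  - rewrite <- cos_neg; apply cos_half; lra.
Qed.

Lemma polar a b : a * a + b * b = 1 -> exists th, cos th = a /\ sin th = b.
Proof.
  intros H.
  assert (Ha : -1 <= a <= 1) by nra.
  assert (Hs : sqrt (1 - a²) = Rabs b).
  { replace (1 - a²) with (b²) by (unfold Rsqr; lra). apply sqrt_Rsqr_abs. }
  destruct (Rle_dec 0 b).
  - exists (acos a); split; [apply cos_acos; auto|].
    rewrite sin_acos, Hs by auto. apply Rabs_right; lra.
  - exists (- acos a); split; [rewrite cos_neg; apply cos_acos; auto|].
    rewrite sin_neg, sin_acos, Hs by auto. rewrite Rabs_left; lra.
Qed.

Lemma sqr_dist p q : dist p q * dist p q = (fst p - fst q) ^ 2 + (snd p - snd q) ^ 2.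
Proof. unfold dist. apply sqrt_sqrt. apply Rplus_le_le_0_compat; apply pow2_ge_0. Qed.

Lemma dist_nonneg p q : 0 <= dist p q.
Proof. unfold dist; apply sqrt_pos. Qed.

Lemma dist_pos p q : p <> q -> 0 < dist p q.
Proof.
  intros H. destruct (Rle_lt_or_eq_dec _ _ (dist_nonneg p q)) as [h|h]; auto.
  exfalso. pose proof (sqr_dist p q) as E. rewrite <- h in E.
  destruct p as [p1 p2], q as [q1 q2]; simpl in E.
  pose proof (pow2_ge_0 (p1 - q1)); pose proof (pow2_ge_0 (p2 - q2)).
  assert (A : (p1 - q1) ^ 2 = 0) by lra. assert (B : (p2 - q2) ^ 2 = 0) by lra.
  simpl in A, B. rewrite Rmult_1_r in A, B.
  apply Rmult_integral in A; apply Rmult_integral in B.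
  assert (p1 = q1) by (destruct A; lra). assert (p2 = q2) by (destruct B; lra).
  apply H; f_equal; lra.
Qed.

Lemma lt_from_sqr a b : 0 <= a -> 0 <= b -> a * a < b * b -> a < b.
Proof. intros; nra. Qed.

Section Main.
Variables (V : list point) (Rad : R) (k : nat) (r : nat -> R) (alpha : R).
Hypothesis HRad : 0 < Rad.
Hypothesis Hlev : radius_levels k r Rad.
Hypothesis Hal0 : 0 < alpha.
Hypothesis Hal : alpha <= 2 * PI / 3.

Lemma r_le_k i : (1 <= i <= k)%nat -> r i <= r k.
Proof.
  destruct Hlev as [_ [_ [Hinc _]]].
  intros [H1 H2].
  assert (G : forall n, (i <= n)%nat -> (n <= k)%nat -> r i <= r n).
  { induction n as [|n IH]; intros A B.
    - assert (i = 0%nat) by lia; subst; lra.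
    - destruct (Nat.eq_dec i (S n)) as [->|Ne]; [lra|].
      pose proof (Hinc n ltac:(lia) ltac:(lia)). specialize (IH ltac:(lia) ltac:(lia)). lra. }
  apply G; lia.
Qed.

Lemma iu_exists x : exists i, is_iu V k r alpha x i.
Proof.
  destruct Hlev as [Hk _].
  destruct (classic (exists j, (1 <= j <= k)%nat /\ ~ has_gap x alpha (Sset V r j x))) as [[j [Hj Hg]]|Hn].
  - assert (Hl : forall n, (1 <= n)%nat -> ~ has_gap x alpha (Sset V r n x) ->
        exists m, (1 <= m <= n)%nat /\ ~ has_gap x alpha (Sset V r m x) /\
          forall j', (1 <= j')%nat -> (j' < m)%nat -> has_gap x alpha (Sset V r j' x)).
    { intro n. induction n as [n IH] using (well_founded_induction Wf_nat.lt_wf).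
      intros Hn1 Hng.
      destruct (classic (exists j', (1 <= j')%nat /\ (j' < n)%nat /\ ~ has_gap x alpha (Sset V r j' x))) as [[j' [A [B C]]]|Hno].
      - destruct (IH j' B A C) as [m [M1 [M2 M3]]]. exists m; split; [lia|auto].
      - exists n; split; [lia|split; auto]. intros j' A B.
        apply NNPP; intro C; apply Hno; eauto. }
    destruct (Hl j ltac:(lia) Hg) as [m [M1 [M2 M3]]].
    exists m. split; [lia|]. left; auto.
  - exists k. split; [lia|]. right; split; auto.
    intros j Hj. apply NNPP; intro C; apply Hn; eauto.
Qed.

Lemma key x y : In x V -> In y V -> x <> y -> dist x y <= Rad ->
  ~ Nalpha V k r alpha x y ->
  exists w, In w V /\ w <> x /\ dist x w < dist x y /\ dist w y < dist x y.
Proof.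
  intros Hx Hy Hxy Hd HN.
  destruct (iu_exists x) as [i Hi].
  assert (HS : ~ Sset V r i x y) by (intro; apply HN; exists i; auto).
  assert (Hri : r i < dist x y).
  { apply Rnot_le_lt; intro; apply HS; repeat split; auto. }
  destruct Hi as [Hik [[Hng _]|[Hek _]]].
  2:{ destruct Hlev as [_ [_ [_ Hrk]]]. subst i. lra. }
  set (d := dist x y) in *.
  assert (Hdp : 0 < d) by (apply dist_pos; auto).
  pose proof (sqr_dist x y) as Hsq. fold d in Hsq.
  destruct (polar ((fst y - fst x) / d) ((snd y - snd x) / d)) as [th [Hc Hs]].
  { replace ((fst y - fst x) / d * ((fst y - fst x) / d) + (snd y - snd x) / d * ((snd y - snd x) / d))
      with (((fst x - fst y) ^ 2 + (snd x - snd y) ^ 2) / (d * d)) by (field; lra).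
    rewrite <- Hsq. field. lra. }
  assert (Hy1 : fst y = fst x + d * cos th) by (rewrite Hc; field; lra).
  assert (Hy2 : snd y = snd x + d * sin th) by (rewrite Hs; field; lra).
  assert (Hex : exists w, Sset V r i x w /\ in_cone x alpha th w).
  { apply NNPP; intro C; apply Hng. exists th. intros v Sv Cv. apply C; eauto. }
  destruct Hex as [w [[Hw [Hwx Hdw]] [t [phi [Ht [Hphi Hweq]]]]]].
  assert (Hdxw : dist x w = t).
  { unfold dist. rewrite Hweq; cbn [fst snd].
    replace ((fst x - (fst x + t * cos phi)) ^ 2 + (snd x - (snd x + t * sin phi)) ^ 2)
      with (t * t * (Rsqr (sin phi) + Rsqr (cos phi))) by (unfold Rsqr; ring).
    rewrite sin2_cos2, Rmult_1_r. apply sqrt_square; auto. }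
  assert (Htp : 0 < t) by (rewrite <- Hdxw; apply dist_pos; auto).
  assert (Htd : t < d) by lra.
  exists w; split; [auto|split; [auto|split; [lra|]]].
  apply lt_from_sqr; [apply dist_nonneg|lra|].
  rewrite sqr_dist. rewrite Hweq, Hy1, Hy2; cbn [fst snd].
  assert (Hcs : 1/2 <= cos (phi - th)) by (apply cos_half_abs; lra).
  rewrite cos_minus in Hcs.
  pose proof (sin2_cos2 phi) as E1. pose proof (sin2_cos2 th) as E2.
  unfold Rsqr in E1, E2.
  replace ((fst x + t * cos phi - (fst x + d * cos th)) ^ 2 +
           (snd x + t * sin phi - (snd x + d * sin th)) ^ 2)
    with (t * t * (sin phi * sin phi + cos phi * cos phi) + d * d * (sin th * sin th + cos th * cos th)
          - 2 * t * d * (cos phi * cos th + sin phi * sin th)) by ring.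
  rewrite E1, E2.
  assert (P1 : t * d * (1/2) <= t * d * (cos phi * cos th + sin phi * sin th))
    by (apply Rmult_le_compat_l; [nra|lra]).
  assert (P2 : 0 < t * (d - t)) by (apply Rmult_lt_0_compat; lra).
  nra.
Qed.

Definition cnt (e : R) : nat :=
  length (filter (fun p => if Rlt_dec (dist (fst p) (snd p)) e then true else false)
                 (list_prod V V)).

Lemma filter_lt {A} (f g : A -> bool) (l : list A) :
  (forall x, f x = true -> g x = true) ->
  (length (filter f l) <= length (filter g l))%nat /\
  (forall z, In z l -> f z = false -> g z = true -> (length (filter f l) < length (filter g l))%nat).
Proof.
  intros Hfg. induction l as [|a l [IH1 IH2]]; simpl.
  - split; [lia|tauto].
  - split.
    + destruct (f a) eqn:Ea; [rewrite (Hfg a Ea); simpl; lia|].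
      destruct (g a); simpl; lia.
    + intros z [<-|Hz] Fz Gz.
      * rewrite Fz, Gz; simpl; lia.
      * specialize (IH2 z Hz Fz Gz).
        destruct (f a) eqn:Ea; [rewrite (Hfg a Ea); simpl; lia|].
        destruct (g a); simpl; lia.
Qed.

Lemma cnt_lt a b e : In a V -> In b V -> dist a b < e -> (cnt (dist a b) < cnt e)%nat.
Proof.
  intros Ha Hb H. unfold cnt.
  set (f := fun p : point * point => if Rlt_dec (dist (fst p) (snd p)) (dist a b) then true else false).
  set (g := fun p : point * point => if Rlt_dec (dist (fst p) (snd p)) e then true else false).
  assert (Hfg : forall p, f p = true -> g p = true).
  { intros p; unfold f, g; destruct Rlt_dec; destruct Rlt_dec; auto; intros; lra. }
  apply (proj2 (filter_lt f g (list_prod V V) Hfg) (a, b)).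
  - apply in_prod; eauto.
  - unfold f; simpl; destruct Rlt_dec; auto; lra.
  - unfold g; simpl; destruct Rlt_dec; auto; lra.
Qed.

Lemma main_edge : forall n u v, (cnt (dist u v) < n)%nat ->
  In u V -> In v V -> u <> v -> dist u v <= Rad ->
  connected (Eminus V k r alpha) u v.
Proof.
  induction n as [|n IH]; intros u v Hn Hu Hv Huv Hd; [lia|].
  destruct (classic (Nalpha V k r alpha u v)) as [N1|N1];
  [destruct (classic (Nalpha V k r alpha v u)) as [N2|N2]|].
  - apply rt_step; repeat split; auto.
  - destruct (key v u Hv Hu (not_eq_sym Huv) ltac:(rewrite dist_sym; lra) N2)
      as [w [Hw [Hwv [H1 H2]]]].
    rewrite (dist_sym v u) in H1, H2.
    assert (H1' : dist u w < dist u v) by (rewrite dist_sym; exact H2).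
    assert (H2' : dist w v < dist u v) by (rewrite dist_sym; exact H1).
    assert (Hwu : w <> u) by (intro; subst; lra).
    pose proof (cnt_lt u w (dist u v) Hu Hw H1').
    pose proof (cnt_lt w v (dist u v) Hw Hv H2').
    apply rt_trans with w.
    + apply IH; auto; lia || lra.
    + apply IH; auto; lia || lra.
  - destruct (key u v Hu Hv Huv Hd N1) as [w [Hw [Hwu [H1 H2]]]].
    assert (Hwv : w <> v) by (intro; subst; lra).
    pose proof (cnt_lt u w (dist u v) Hu Hw H1).
    pose proof (cnt_lt w v (dist u v) Hw Hv H2).
    apply rt_trans with w.
    + apply IH; auto; lia || lra.
    + apply IH; auto; lia || lra.
Qed.

End Main.

Theorem theorem4 (V : list point) (Rad : R) (k : nat) (r : nat -> R) (alpha : R) :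
  NoDup V ->
  0 < Rad ->
  radius_levels k r Rad ->
  0 < alpha -> alpha <= 2 * PI / 3 ->
  forall u v, In u V -> In v V ->
    (connected (Eminus V k r alpha) u v <-> connected (ER V Rad) u v).
Proof.
  intros _ HR Hlev Ha0 Ha u v Hu Hv. clear Hu Hv; split; intro H; unfold connected in *.
  - induction H as [x y E|x|x y z _ IH1 _ IH2]; [|apply rt_refl|apply rt_trans with y; auto].
    apply rt_step. destruct E as [Hx [Hy [N1 _]]].
    destruct N1 as [i [Hiu HS]]. destruct Hiu as [Hi _]. destruct HS as [_ [Hne Hd]].
    split; [auto|split; [auto|split; [intro; subst; apply Hne; reflexivity|]]].
    pose proof (r_le_k Rad k r Hlev i Hi). destruct Hlev as [_ [_ [_ Hk]]]. lra.
  - induction H as [x y E|x|x y z _ IH1 _ IH2]; [|apply rt_refl|apply rt_trans with y; auto].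
    destruct E as [Hx [Hy [Hne Hd]]].
    eapply main_edge; eauto.
Qed.
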